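(* Let $n\ge4$, $x_1,\dots,x_{n-1}>0$, $\gamma,\delta>0$ with $\gamma\ne1\ne\delta$, $x_0=1$, and let $\mathbf{P}$ be the $n\times n$ matrix with entries $p_{ij}=x_{j-1}/x_{i-1}$ except $p_{12}=\delta x_1$, $p_{21}=1/(\delta x_1)$, $p_{13}=\gamma x_2$, $p_{31}=1/(\gamma x_2)$. Let $\mathbf{w}^{EM}$ be the principal right eigenvector of $\mathbf{P}$. If $\delta<1$ and $\delta\le\gamma$, then $w_1^{EM}/w_2^{EM}>\delta x_1$.
   Context: The principal right eigenvector is the positive (Perron) eigenvector belonging to the largest eigenvalue. *)

(* Defs.v *)
From HB Require Import structures.
From mathcomp Require Import all_boot all_order all_algebra.
From mathcomp Require Import all_reals.
Set Implicit Arguments. Unset Strict Implicit. Unset Printing Implicit Defensive.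
Import Order.TTheory GRing.Theory Num.Theory.
Local Open Scope ring_scope.

(* Entry p_{ij} of the perturbed consistent PC matrix, with 0-based indices:
   paper index i corresponds to nat index i-1, and x k is x_k (x 0 = 1). *)
Definition pEM (R : fieldType) (x : nat -> R) (gamma delta : R) (i j : nat) : R :=
  if (i == 0%N) && (j == 1%N) then delta * x 1%N
  else if (i == 1%N) && (j == 0%N) then (delta * x 1%N)^-1
  else if (i == 0%N) && (j == 2%N) then gamma * x 2%N
  else if (i == 2%N) && (j == 0%N) then (gamma * x 2%N)^-1
  else x j / x i.

Definition PEM (R : fieldType) (n : nat) (x : nat -> R) (gamma delta : R)
  : 'M[R]_n := \matrix_(i < n, j < n) pEM x gamma delta i j.

Definition principal_right_eigvec (R : realFieldType) (n : nat)
  (P : 'M[R]_n) (w : 'cV[R]_n) : Prop :=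
  exists lam : R,
    [/\ P *m w = lam *: w,
        (forall i, 0 < w i 0) &
        (forall mu : R, eigenvalue P mu -> mu <= lam)].

(* Main.v *)
Require Import Defs.
From HB Require Import structures.
From mathcomp Require Import all_boot all_order all_algebra.
From mathcomp Require Import all_reals.
From mathcomp Require Import lra ring.
Import Order.TTheory GRing.Theory Num.Theory.
Local Open Scope ring_scope.

Lemma pEM_gen (R : fieldType) (x : nat -> R) g d (i j : nat) :
  (3 <= j)%N -> pEM x g d i j = x j / x i.
Proof.
move=> hj; rewrite /pEM.
have -> : (j == 1%N) = false by apply/eqP => e; rewrite e in hj.
have -> : (j == 0%N) = false by apply/eqP => e; rewrite e in hj.
have -> : (j == 2%N) = false by apply/eqP => e; rewrite e in hj.
by rewrite !andbF.
Qed.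

Lemma finalstep (F : realFieldType) (a b c d g x1 x2 r l : F) :
  0 < a -> 0 < b -> 0 < c -> 0 < d -> 0 < x1 -> 0 < x2 -> 0 < r ->
  d < 1 -> d <= g ->
  1 / 1 * a + (d * x1 * b + (g * x2 * c + r / 1)) = l * a ->
  (d * x1)^-1 * a + (x1 / x1 * b + (x2 / x1 * c + r / x1)) = l * b ->
  d * x1 * b < a.
Proof.
move=> ha hb hc hd hx1 hx2 hr hd1 hdg h0 h1.
have dx : d * x1 != 0 by rewrite mulf_neq0 // lt0r_neq0.
have x1n : x1 != 0 by rewrite lt0r_neq0.
have h1' : a + d * x1 * b + d * x2 * c + d * r = l * d * x1 * b.
  transitivity (((d * x1)^-1 * a + (x1 / x1 * b + (x2 / x1 * c + r / x1))) * (d * x1)).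
    field. by rewrite x1n /= lt0r_neq0.
  rewrite h1; ring.
rewrite !divr1 mul1r in h0.
have lpos : 0 < l.
  have hg : 0 < g by apply: lt_le_trans hdg.
  have p1 : 0 < d * x1 * b by rewrite !mulr_gt0.
  have p2 : 0 < g * x2 * c by rewrite !mulr_gt0.
  have : 0 < l * a by rewrite -h0; lra.
  by rewrite pmulr_lgt0.
have key : l * (a - d * x1 * b) = (g - d) * x2 * c + (1 - d) * r.
  have e : l * (a - d * x1 * b) = l * a - l * d * x1 * b by ring.
  rewrite e -h0 -h1'; ring.
have : 0 < l * (a - d * x1 * b).
  rewrite key; apply: ltr_wpDl.
    by apply: mulr_ge0; [apply: mulr_ge0; [rewrite subr_ge0 | apply: ltW] | apply: ltW].
  by apply: mulr_gt0 => //; rewrite subr_gt0.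
by rewrite pmulr_rgt0 // subr_gt0.
Qed.

Section PV.
Variables (R : fieldType) (x : nat -> R) (g d : R).
Lemma p00 : pEM x g d 0 0 = x 0%N / x 0%N. Proof. by []. Qed.
Lemma p01 : pEM x g d 0 1 = d * x 1%N. Proof. by []. Qed.
Lemma p02 : pEM x g d 0 2 = g * x 2%N. Proof. by []. Qed.
Lemma p10 : pEM x g d 1 0 = (d * x 1%N)^-1. Proof. by []. Qed.
Lemma p11 : pEM x g d 1 1 = x 1%N / x 1%N. Proof. by []. Qed.
Lemma p12 : pEM x g d 1 2 = x 2%N / x 1%N. Proof. by []. Qed.
End PV.

Theorem mainTheorem6 (R : realType) (n : nat) (x : nat -> R) (gamma delta : R)
  (w : 'cV[R]_n) :
  (4 <= n)%N ->
  x 0%N = 1 ->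
  (forall k : nat, (1 <= k < n)%N -> 0 < x k) ->
  0 < gamma -> 0 < delta -> gamma != 1 -> delta != 1 ->
  principal_right_eigvec (PEM n x gamma delta) w ->
  delta < 1 -> delta <= gamma ->
  forall i1 i2 : 'I_n, nat_of_ord i1 = 0%N -> nat_of_ord i2 = 1%N ->
    delta * x 1%N < w i1 0 / w i2 0.
Proof.
move=> Hn x0 xpos gpos dpos _ _ [lam [HP wpos _]] dlt dle i1 i2 hi1 hi2.
destruct n as [|[|[|[|m]]]]; try by [].
set N := m.+4.
pose W (j : nat) := w (inord j) 0.
have Wpos : forall j, 0 < W j by move=> j; apply: wpos.
have row : forall i, (i < N)%N ->
    \sum_(0 <= j < N) pEM x gamma delta i j * W j = lam * W i.
  move=> i hi.
  have := congr1 (fun M : 'cV[R]_N => M (inord i) 0) HP.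
  rewrite /= [RHS]mxE mxE big_mkord => <-.
  apply: eq_bigr => j _; rewrite mxE inordK // /W.
  by rewrite inord_val.
set r := \sum_(3 <= j < N) x j * W j.
have hsum : forall c, \sum_(3 <= j < N) pEM x gamma delta c j * W j = r / x c.
  move=> c; rewrite /r mulr_suml big_nat_cond [RHS]big_nat_cond.
  apply: eq_bigr => j /andP[/andP[hj _] _].
  by rewrite pEM_gen // mulrAC.
have xp1 : 0 < x 1%N by apply: xpos.
have xp2 : 0 < x 2%N by apply: xpos.
have rpos : 0 < r.
  rewrite /r big_ltn // ltr_pwDl //.
    by apply: mulr_gt0 => //; apply: xpos.
  rewrite big_nat_cond; apply: sumr_ge0 => j /andP[/andP[hj hjN] _].
  apply: mulr_ge0; last exact: ltW.
  by apply: ltW; apply: xpos; rewrite hjN andbT; apply: leq_trans hj.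
have r0 := row 0%N isT.
have r1 := row 1%N isT.
rewrite big_ltn // big_ltn // big_ltn // hsum p00 p01 p02 x0 in r0.
rewrite big_ltn // big_ltn // big_ltn // hsum p10 p11 p12 in r1.
have -> : i1 = inord 0 by apply: val_inj; rewrite /= inordK // hi1.
have -> : i2 = inord 1 by apply: val_inj; rewrite /= inordK // hi2.
rewrite -/(W 0%N) -/(W 1%N).
have W0 := Wpos 0%N; have W1 := Wpos 1%N; have W2 := Wpos 2%N.
rewrite ltr_pdivlMr //.
exact: (finalstep _ _ _ _ _ _ _ _ _ _ W0 W1 W2 dpos xp1 xp2 rpos dlt dle r0 r1).
Qed.
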